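(* For every integer $n\ge 3$, the sum of all principal minors of order $n-1$ of $L_S$ equals $$\sum_{i=1}^{n}\det(L_S[i])=\frac{n}{2\sqrt{3}}\,(p^{n}-q^{n}),$$ where $L_S[i]$ is the matrix obtained from $L_S$ by deleting its $i$-th row and $i$-th column. Equivalently, if $\det(xI-L_S)=x^n+a_1x^{n-1}+\dots+a_{n-1}x+a_n$, then $(-1)^{n-1}a_{n-1}=\frac{n}{2\sqrt3}(p^n-q^n)$.
   Context: $p=2+\sqrt3$, $q=2-\sqrt3$. $L_S$ denotes the $n\times n$ matrix with all diagonal entries equal to $4$, entries $(i,i+1)$ and $(i+1,i)$ equal to $-1$ for $1\le i\le n-1$, entries $(1,n)$ and $(n,1)$ equal to $+1$, and all other entries $0$. *)

(* Defs.v *)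
From mathcomp Require Import all_boot all_order all_algebra.
Set Implicit Arguments. Unset Strict Implicit. Unset Printing Implicit Defensive.
Import Order.TTheory GRing.Theory Num.Theory.
Local Open Scope ring_scope.

(* The matrix L_S (0-indexed): diagonal 4, entries (i,i+1),(i+1,i) equal -1,
   corner entries (0,n-1),(n-1,0) equal +1, all others 0.
   For n >= 3 the three cases are disjoint. *)
Definition LS (R : nzRingType) (n : nat) : 'M[R]_n :=
  \matrix_(i < n, j < n)
    if i == j then 4%:R
    else if (i.+1 == j :> nat) || (j.+1 == i :> nat) then -1
    else if ((i == 0 :> nat) && (j == n.-1 :> nat)) ||
            ((j == 0 :> nat) && (i == n.-1 :> nat)) then 1
    else 0.

Definition del_rc (R : nzRingType) (n : nat) (A : 'M[R]_n) (i : 'I_n)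
  : 'M[R]_n.-1 := row' i (col' i A).

(* Main.v *)
Require Import Defs.
From mathcomp Require Import all_boot all_order all_algebra.
From mathcomp Require Import perm zify ring lra.
Import Order.TTheory GRing.Theory Num.Theory.
Local Open Scope ring_scope.

Lemma det_conj (R : comPzRingType) m (s : {perm 'I_m}) (d : 'I_m -> R) (A B : 'M[R]_m) :
  (forall j, d j * d j = 1) ->
  (forall j k, A (s j) (s k) = d j * d k * B j k) -> \det A = \det B.
Proof.
move=> hd hA.
have E : row_perm s (col_perm s A) = diag_mx (\row_j d j) *m B *m diag_mx (\row_j d j).
  apply/matrixP => j k; rewrite mul_mx_diag mul_diag_mx !mxE hA; ring.
have := congr1 determinant E.
rewrite row_permE col_permE !det_mulmx !det_perm perm.odd_permV det_diag.
have hP : \prod_i (\row_j d j) 0 i * \prod_i (\row_j d j) 0 i = 1 :> R.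
  rewrite -big_split /=; apply: big1 => j _; rewrite mxE; exact: hd.
set P := \prod_i _.
have -> : P * \det B * P = \det B by rewrite mulrAC hP mul1r.
case: (perm.odd_perm s); rewrite /= ?expr1 ?expr0 => <-; ring.
Qed.


Definition tt (R : nzRingType) (a b : nat) : R :=
  if a == b then 4%:R else if (a.+1 == b) || (b.+1 == a) then -1 else 0.
Definition TT (R : nzRingType) m : 'M[R]_m := \matrix_(a < m, b < m) tt R a b.

Lemma tt_far (R : nzRingType) a b : (a.+1 < b)%N || (b.+1 < a)%N -> tt R a b = 0.
Proof. move=> h; rewrite /tt; case: ifP => ?; [lia|]; case: ifP => ?; [lia|done]. Qed.

Lemma bump_lt m (a : 'I_m) : bump m a = a.
Proof. by rewrite /bump leqNgt ltn_ord. Qed.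

Lemma TT_minor (R : comNzRingType) m : row' ord_max (col' ord_max (TT R m.+1)) = TT R m.
Proof. by apply/matrixP => a b; rewrite !mxE /= !bump_lt. Qed.

Lemma sgn2 (R : nzRingType) m : (-1) ^+ (m + m) = 1 :> R.
Proof. by rewrite addnn -mul2n mulnC exprM sqrr_sign. Qed.

Lemma TT_rec (R : comNzRingType) m :
  \det (TT R m.+2) = 4%:R * \det (TT R m.+1) - \det (TT R m).
Proof.
rewrite (expand_det_row _ ord_max) !big_ord_recr /=.
rewrite big1 ?add0r; last first.
  move=> j _; rewrite !mxE /= tt_far ?mul0r //; apply/orP; right; have := ltn_ord j; lia.
rewrite /cofactor TT_minor !mxE /=.
have -> : tt R m.+1 m = -1 by rewrite /tt; case: ifP => ?; [lia|]; case: ifP => ?; [done|lia].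
have -> : tt R m.+1 m.+1 = 4%:R by rewrite /tt eqxx.
rewrite sgn2 addSn exprS sgn2 mulr1.
set M := row' _ _.
rewrite (expand_det_col _ ord_max) big_ord_recr /=.
rewrite big1 ?add0r; last first.
  move=> j _; rewrite /M !mxE /= tt_far ?mul0r //; rewrite /bump /=; apply/orP; left.
  have := ltn_ord j; case: leqP => h /=; lia.
rewrite /cofactor /M !mxE /= sgn2 mul1r.
have -> : tt R (bump m.+1 m) (bump m m) = -1.
  rewrite /bump ltnn leqnn /= /tt; case: ifP => ?; [lia|]; case: ifP => ?; [done|lia].
have -> : row' ord_max (col' ord_max (row' ord_max
     (col' (widen_ord (m:=m.+2) (leqnSn m.+1) ord_max) (TT R m.+2)))) = TT R m.
  apply/matrixP => a b; rewrite !mxE /=; case: a b => [a ha] [b hb] /=; move: ha hb => /= ha hb.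
  congr tt; rewrite /bump; do ! case: leqP => ? /=; lia.
ring.
Qed.

Definition lsn (R : nzRingType) (n x y : nat) : R :=
    if x == y then 4%:R
    else if (x.+1 == y) || (y.+1 == x) then -1
    else if ((x == 0) && (y == n.-1)) || ((y == 0) && (x == n.-1)) then 1
    else 0.

Lemma LS_nat (R : nzRingType) n (x y : 'I_n) : LS R n x y = lsn R n x y.
Proof. by rewrite /LS mxE. Qed.

Ltac splitif := repeat match goal with |- context [if ?c then _ else _] =>
   lazymatch c with context [if _ then _ else _] => fail | _ => case: (boolP c) => ? /= end end.

Section Del.
Variables (R : comNzRingType) (k : nat) (i : 'I_k.+3).

Definition fpos (a : nat) : nat := if (i + a.+1 < k.+3)%N then (i + a.+1)%N else (i + a.+1 - k.+3)%N.
Definition gpos (a : nat) : nat := if (fpos a < i)%N then fpos a else (fpos a).-1.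
Definition sf (a : 'I_k.+2) : 'I_k.+2 := inord (gpos a).

Lemma gpos_lt (a : 'I_k.+2) : (gpos a <= k.+1)%N.
Proof. have := ltn_ord a; have := ltn_ord i; rewrite /gpos /fpos; splitif; lia. Qed.

Lemma sf_inj : injective sf.
Proof.
move=> a b /(congr1 (@nat_of_ord _)); rewrite /sf !inordK ?ltnS ?gpos_lt // => h.
apply/val_inj; move: h; have := ltn_ord a; have := ltn_ord b; have := ltn_ord i.
rewrite /gpos /fpos; splitif; lia.
Qed.

Lemma lift_sf (a : 'I_k.+2) : (lift i (sf a) : nat) = fpos a.
Proof.
rewrite /= /sf inordK ?ltnS ?gpos_lt //; have := ltn_ord a; have := ltn_ord i.
rewrite /bump /gpos /fpos; splitif; lia.
Qed.

Definition dd (a : 'I_k.+2) : R := if (i + a.+1 < k.+3)%N then 1 else -1.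

Lemma del_det : \det (del_rc (LS R k.+3) i) = \det (TT R k.+2).
Proof.
apply: (@det_conj _ _ (perm sf_inj) dd).
  by move=> j; rewrite /dd; case: ifP => _; rewrite ?mulr1 ?mulrNN ?mulr1.
move=> a b; rewrite /del_rc !mxE !permE.
transitivity (lsn R k.+3 (lift i (sf a)) (lift i (sf b))); first by [].
rewrite !lift_sf /lsn /tt /fpos /dd.
have := ltn_ord a; have := ltn_ord b; have := ltn_ord i.
move: (nat_of_ord a) (nat_of_ord b) (nat_of_ord i) => x y z.
splitif; try (move=> *; exfalso; lia); move=> *; ring.
Qed.
End Del.

Lemma pow_rec (R : comNzRingType) (x : R) m : x ^+ 2 = 4%:R * x - 1 ->
  x ^+ m.+3 = 4%:R * x ^+ m.+2 - x ^+ m.+1.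
Proof.
move=> hx; have -> : x ^+ m.+3 = x ^+ m.+1 * x ^+ 2 by rewrite -exprD addn2.
rewrite hx (exprS _ m.+1); ring.
Qed.

Lemma closed (R : rcfType) m :
  let p : R := 2 + Num.sqrt 3 in let q : R := 2 - Num.sqrt 3 in
  \det (TT R m) * (p - q) = p ^+ m.+1 - q ^+ m.+1.
Proof.
move=> p q.
have s3 : Num.sqrt 3 ^+ 2 = 3 :> R by rewrite sqr_sqrtr // ler0n.
have hp : p ^+ 2 = 4%:R * p - 1 by rewrite /p sqrrD s3; ring.
have hq : q ^+ 2 = 4%:R * q - 1 by rewrite /q sqrrB s3; ring.
suff : \det (TT R m) * (p - q) = p ^+ m.+1 - q ^+ m.+1 /\
       \det (TT R m.+1) * (p - q) = p ^+ m.+2 - q ^+ m.+2 by case.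
elim: m => [|m [IH1 IH2]].
  split; first by rewrite det_mx00 mul1r !expr1.
  rewrite det_mx11 mxE /tt /= hp hq /p /q; ring.
split=> //; rewrite TT_rec (@pow_rec R p m hp) (@pow_rec R q m hq) mulrBl -mulrA IH2 IH1; ring.
Qed.

Theorem fact1 (R : rcfType) (n : nat) (hn : (3 <= n)%N) :
  let p : R := 2 + Num.sqrt 3 in
  let q : R := 2 - Num.sqrt 3 in
  \sum_(i < n) \det (del_rc (LS R n) i)
    = n%:R / (2 * Num.sqrt 3) * (p ^+ n - q ^+ n).
Proof.
move=> p q.
case: n hn => [|[|[|k]]] // _.
rewrite (eq_bigr (fun _ => \det (TT R k.+2))); last by move=> i _; exact: del_det.
rewrite sumr_const card_ord -(closed R k.+2) -/p -/q.
have s0 : Num.sqrt 3 != 0 :> R by rewrite sqrtr_eq0 -ltNge ltr0n.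
have -> : p - q = 2 * Num.sqrt 3 by rewrite /p /q; ring.
by rewrite -mulr_natr; field.
Qed.
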